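(* Let $n\ge1$ and let $P=\{(i,j)\colon 1\le i\le j\le n\}$ be the shifted staircase. Then $\sum_{p\in P}\mathbb{1}_p\equiv \frac{n(n+1)}{4}$.
   Context: $P$ is ordered by $(i,j)\le(i',j')$ iff $i\le i'$ and $j\le j'$. $\mathcal{J}(P)$ is the set of order ideals of $P$. For $x\in P$, $I\in\mathcal{J}(P)$: $\mathbb{1}_x(I)=1$ if $x\in I$, else $0$; $T_x^+(I)=1$ if $x$ is a minimal element of $P\setminus I$, else $0$; $T_x^-(I)=1$ if $x$ is a maximal element of $I$, else $0$; $T_x=T_x^+-T_x^-$. For $f,g\colon\mathcal{J}(P)\to\mathbb{R}$, $f\equiv g$ means $f-g=\sum_{x\in P}c_xT_x$ for some real constants $c_x$; a real number denotes the corresponding constant function. *)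

(* Defs.v *)
From HB Require Import structures.
From mathcomp Require Import all_boot all_order all_algebra.
From mathcomp Require Import Rstruct.
Set Implicit Arguments. Unset Strict Implicit. Unset Printing Implicit Defensive.
Import Order.TTheory GRing.Theory Num.Theory.

(* Ambient type of index pairs; the element (i,j) of the paper (1-indexed)
   is represented by (i-1, j-1) : 'I_n * 'I_n. *)
Definition pt (n : nat) := ('I_n * 'I_n)%type.

Definition leP (n : nat) (x y : pt n) : bool :=
  ((x.1 <= y.1)%N && (x.2 <= y.2)%N).

Definition stair (n : nat) : {set pt n} := [set x : pt n | (x.1 <= x.2)%N].

Definition is_ideal (n : nat) (I : {set pt n}) : bool :=
  (I \subset stair n) &&
  [forall x : pt n, forall y : pt n,
     [&& x \in stair n, y \in I & leP x y] ==> (x \in I)].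

Definition min_compl (n : nat) (I : {set pt n}) (x : pt n) : bool :=
  (x \in stair n :\: I) &&
  [forall y : pt n, ((y \in stair n :\: I) && leP y x) ==> (y == x)].

Definition max_in (n : nat) (I : {set pt n}) (x : pt n) : bool :=
  (x \in I) && [forall y : pt n, ((y \in I) && leP x y) ==> (y == x)].

Local Open Scope ring_scope.

Definition ind (n : nat) (x : pt n) (I : {set pt n}) : Rdefinitions.R :=
  if x \in I then 1 else 0.
Definition Tplus (n : nat) (x : pt n) (I : {set pt n}) : Rdefinitions.R :=
  if min_compl I x then 1 else 0.
Definition Tminus (n : nat) (x : pt n) (I : {set pt n}) : Rdefinitions.R :=
  if max_in I x then 1 else 0.
Definition toggleT (n : nat) (x : pt n) (I : {set pt n}) : Rdefinitions.R :=
  Tplus x I - Tminus x I.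

Definition toggle_equiv (n : nat) (f g : {set pt n} -> Rdefinitions.R) : Prop :=
  exists c : pt n -> Rdefinitions.R, forall I : {set pt n}, is_ideal I ->
    f I - g I = \sum_(x in stair n) c x * toggleT x I.

(* Main.v *)
Require Import Defs.
From mathcomp Require Import all_boot all_order all_algebra.
From mathcomp Require Import Rstruct.
From mathcomp Require Import zify ring lra.
Import Order.TTheory GRing.Theory Num.Theory.
Set Implicit Arguments. Unset Strict Implicit. Unset Printing Implicit Defensive.

Section S.
Variable k : nat.
Notation N := k.+1.
Variable I : {set pt N}.
Hypothesis hI : is_ideal I.

Definition Bb (i j : nat) : bool :=
  [&& (i < N)%N, (j < N)%N & ((inord i, inord j) : pt N) \in I].

Lemma ideal_sub (x : pt N) : x \in I -> (x.1 <= x.2)%N.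
Proof.
case/andP: hI => /subsetP hs _ /hs; by rewrite inE.
Qed.

Lemma ideal_down (x y : pt N) : (x.1 <= x.2)%N -> y \in I -> (x.1 <= y.1)%N -> (x.2 <= y.2)%N -> x \in I.
Proof.
case/andP: hI => _ /forallP h hx hy h1 h2.
have := h x => /forallP /(_ y) /implyP; apply.
by rewrite inE hx hy /Defs.leP h1 h2.
Qed.

Lemma BbE (x : pt N) : Bb x.1 x.2 = (x \in I).
Proof.
case: x => a b /=; by rewrite /Bb !ltn_ord !inord_val.
Qed.

Lemma Bb_le i j : Bb i j -> (i <= j)%N.
Proof.
case/and3P => hi hj /ideal_sub /=; by rewrite !inordK.
Qed.

Lemma Bb_mono i j i' j' : Bb i j -> (i' <= i)%N -> (j' <= j)%N -> (i' <= j')%N -> Bb i' j'.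
Proof.
move=> h h1 h2 h3; have hle := Bb_le h.
case/and3P: h => hi hj hin.
have hi' : (i' < N)%N by lia.
have hj' : (j' < N)%N by lia.
rewrite /Bb hi' hj' /=.
apply: (ideal_down _ hin) => /=; rewrite !inordK //.
Qed.

Lemma inI i j : (i < N)%N -> (j < N)%N -> (((inord i, inord j) : pt N) \in I) = Bb i j.
Proof. by move=> hi hj; rewrite /Bb hi hj. Qed.

Lemma pair_eq i j (a b : 'I_N) : (i < N)%N -> (j < N)%N -> (a : nat) = i -> (b : nat) = j ->
  ((a, b) == ((inord i, inord j) : pt N)) = true.
Proof.
move=> hi hj ha hb; apply/eqP; congr pair; apply: val_inj; rewrite /= inordK //.
Qed.

Lemma maxP i j : (i <= j < N)%N ->
  max_in I (inord i, inord j) = [&& Bb i j, ~~ Bb i.+1 j & ~~ Bb i j.+1].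
Proof.
move=> /andP[hij hj]; have hi : (i < N)%N by lia.
rewrite /max_in inI //.
case hb: (Bb i j) => //=.
apply/forallP/idP.
- move=> h; apply/andP; split; apply/negP => hb'.
  + have hb2 := hb'; case/and3P: hb' => h1 h2 hin.
    have := h (inord i.+1, inord j).
    rewrite hin /Defs.leP /= !inordK // leqnSn leqnn /= => /eqP [] /(congr1 val).
    rewrite /= !inordK //; lia.
  + have hb2 := hb'; case/and3P: hb' => h1 h2 hin.
    have := h (inord i, inord j.+1).
    rewrite hin /Defs.leP /= !inordK // leqnSn leqnn /= => /eqP [] /(congr1 val).
    rewrite /= !inordK //; lia.
- move=> /andP[n1 n2] [a b]; apply/implyP.
  rewrite /Defs.leP /= !inordK // => /andP[hy /andP[ha hb2]].
  have hab : Bb a b by rewrite (BbE (a, b)).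
  have hle := Bb_le hab.
  case: (ltnP j b) => hjb.
    by move: n2; rewrite (Bb_mono hab (i' := i) (j' := j.+1)) //; lia.
  case: (ltnP i a) => hia.
    by move: n1; rewrite (Bb_mono hab (i' := i.+1) (j' := j)) //; lia.
  apply: pair_eq => //; lia.
Qed.

Lemma minP i j : (i <= j < N)%N ->
  min_compl I (inord i, inord j) =
  [&& ~~ Bb i j, (if i is i'.+1 then Bb i' j else true) & (if (i < j)%N then Bb i j.-1 else true)].
Proof.
move=> /andP[hij hj]; have hi : (i < N)%N by lia.
rewrite /min_compl !inE /= !inordK // hij inI // andbT.
case hb: (Bb i j) => //=.
apply/forallP/idP.
- move=> h; apply/andP; split.
  + case: i hij hi hb h => [|i'] // hij hi hb h.
    apply/negPn/negP => hn.
    have hi' : (i' < N)%N by lia.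
    have := h (inord i', inord j).
    rewrite !inE /= /Defs.leP /= !inordK // inI // (negbTE hn) /=.
    have -> : (i' <= j)%N by lia.
    rewrite leqnSn leqnn /= => /eqP [] /(congr1 val).
    rewrite /= !inordK //; lia.
  + case: ifP => // hlt.
    apply/negPn/negP => hn.
    have hj' : (j.-1 < N)%N by lia.
    have := h (inord i, inord j.-1).
    rewrite !inE /= /Defs.leP /= !inordK // inI // (negbTE hn) /=.
    have -> : (i <= j.-1)%N by lia.
    have -> : (j.-1 <= j)%N by lia.
    rewrite leqnn /= => /eqP /(congr1 snd) /(congr1 val).
    rewrite /= !inordK //; lia.
- move=> /andP[c1 c2] [a b]; apply/implyP.
  rewrite !inE /Defs.leP /= !inordK // => /andP[/andP[hn hst] /andP[ha hb2]].
  rewrite -(BbE (a, b)) /= in hn.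
  case: (ltnP a i) => hai.
    case: i hij hi hb c1 c2 ha hai => [|i'] // hij hi hb c1 c2 ha hai.
    by move: hn; rewrite (Bb_mono c1 (i' := a) (j' := b)) //; lia.
  case: (ltnP b j) => hbj.
    have hlt : (i < j)%N by lia.
    rewrite hlt in c2.
    by move: hn; rewrite (Bb_mono c2 (i' := a) (j' := b)) //; lia.
  apply: pair_eq => //; lia.
Qed.

Local Open Scope ring_scope.
Definition B i j : Rdefinitions.R := if Bb i j then 1 else 0.
Definition Tp i j := Tplus ((inord i, inord j) : pt N) I.
Definition Tm i j := Tminus ((inord i, inord j) : pt N) I.

Lemma L1 i j : (i < j)%N -> (j.+1 < N)%N ->
  Tp i.+1 j.+1 - Tm i j = B i j.+1 + B i.+1 j - B i.+1 j.+1 - B i j.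
Proof.
move=> hij hj.
rewrite /Tp /Tm /Tplus /Tminus minP ?maxP; last 2 first.
- apply/andP; split => //; lia.
- apply/andP; split => //; lia.
rewrite ltnS hij /=.
have f1 : Bb i.+1 j.+1 ==> Bb i j.+1.
  by apply/implyP => h; apply: (Bb_mono h); lia.
have f2 : Bb i.+1 j.+1 ==> Bb i.+1 j.
  by apply/implyP => h; apply: (Bb_mono h); lia.
have f3 : Bb i j.+1 ==> Bb i j.
  by apply/implyP => h; apply: (Bb_mono h); lia.
have f4 : Bb i.+1 j ==> Bb i j.
  by apply/implyP => h; apply: (Bb_mono h); lia.
move: f1 f2 f3 f4; rewrite /B.
case: (Bb i.+1 j.+1); case: (Bb i j.+1); case: (Bb i.+1 j); case: (Bb i j) => //= *; lra.
Qed.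

Lemma L0 i : (i.+1 < N)%N ->
  Tp i.+1 i.+1 - Tm i i = B i i.+1 + B i i.+1 - B i.+1 i.+1 - B i i.
Proof.
move=> hi.
rewrite /Tp /Tm /Tplus /Tminus minP ?maxP; last 2 first.
- apply/andP; split => //; lia.
- apply/andP; split => //; lia.
rewrite ltnn /=.
have f0 : Bb i.+1 i = false.
  by apply/negP => /Bb_le; lia.
have f1 : Bb i.+1 i.+1 ==> Bb i i.+1.
  by apply/implyP => h; apply: (Bb_mono h); lia.
have f3 : Bb i i.+1 ==> Bb i i.
  by apply/implyP => h; apply: (Bb_mono h); lia.
move: f1 f3; rewrite /B f0.
case: (Bb i.+1 i.+1); case: (Bb i i.+1); case: (Bb i i) => //= *; lra.
Qed.

Lemma Lb0 : Tp 0 0 = 1 - B 0 0.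
Proof.
rewrite /Tp /Tplus minP //= /B.
case: (Bb 0 0) => /= ; lra.
Qed.

Lemma Lb1 j : (j.+1 < N)%N -> Tp 0 j.+1 = B 0 j - B 0 j.+1.
Proof.
move=> hj.
rewrite /Tp /Tplus minP; last by apply/andP; split => //; lia.
rewrite /=.
have f1 : Bb 0 j.+1 ==> Bb 0 j.
  by apply/implyP => h; apply: (Bb_mono h); lia.
move: f1; rewrite /B.
case: (Bb 0 j.+1); case: (Bb 0 j) => //= *; lra.
Qed.

Lemma Le1 i : (i < k)%N -> Tm i k = B i k - B i.+1 k.
Proof.
move=> hi.
rewrite /Tm /Tminus maxP; last by apply/andP; split => //; lia.
have f0 : Bb i k.+1 = false by rewrite /Bb ltnn andbF.
have f1 : Bb i.+1 k ==> Bb i k.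
  by apply/implyP => h; apply: (Bb_mono h); lia.
move: f1; rewrite /B f0.
case: (Bb i.+1 k); case: (Bb i k) => //= *; lra.
Qed.

Lemma Le0 : Tm k k = B k k.
Proof.
rewrite /Tm /Tminus maxP; last by apply/andP; split => //; lia.
have f0 : Bb k k.+1 = false by rewrite /Bb ltnn andbF.
have f1 : Bb k.+1 k = false by rewrite /Bb ltnn.
rewrite /B f0 f1 andbT.
by case: (Bb k k).
Qed.

Definition m d := \sum_(0 <= i < N - d) B i (i + d).
Definition D d := \sum_(0 <= i < N - d) (Tp i (i + d) - Tm i (i + d)).

Lemma D0 : D 0 = 1 + m 1 + m 1 - m 0 - m 0.
Proof.
have e1 : D 0 = Tp 0 0 - Tm k k + \sum_(0 <= i < k) (Tp i.+1 i.+1 - Tm i i).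
  rewrite /D subn0 sumrB big_nat_recl // big_nat_recr //= sumrB.
  have -> : \sum_(0 <= i < k) Tp i.+1 (i.+1 + 0) = \sum_(0 <= i < k) Tp i.+1 i.+1.
    by apply: eq_bigr => i _; rewrite addn0.
  have -> : \sum_(0 <= i < k) Tm i (i + 0) = \sum_(0 <= i < k) Tm i i.
    by apply: eq_bigr => i _; rewrite addn0.
  rewrite !addn0; lra.
have e2 : \sum_(0 <= i < k) (Tp i.+1 i.+1 - Tm i i) =
   \sum_(0 <= i < k) B i i.+1 + \sum_(0 <= i < k) B i i.+1
   - \sum_(0 <= i < k) B i.+1 i.+1 - \sum_(0 <= i < k) B i i.
  rewrite -big_split -!sumrB /=; apply: eq_big_nat => i hi; rewrite L0 //; lia.
have e3 : m 0 = B 0 0 + \sum_(0 <= i < k) B i.+1 i.+1.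
  rewrite /m subn0 big_nat_recl //; congr (_ + _); apply: eq_bigr => i _; rewrite addn0 //.
have e4 : m 0 = \sum_(0 <= i < k) B i i + B k k.
  rewrite /m subn0 big_nat_recr //= addn0; congr (_ + _); apply: eq_bigr => i _; rewrite addn0 //.
have e5 : m 1 = \sum_(0 <= i < k) B i i.+1.
  rewrite /m subSS subn0; apply: eq_bigr => i _; rewrite addn1 //.
rewrite e1 e2 Lb0 Le0; lra.
Qed.

Lemma Dd d : (d.+1 < N)%N -> D d.+1 = m d - m d.+1 - m d.+1 + m d.+2.
Proof.
move=> hd.
set s := (k - d.+1)%N.
have hs1 : (N - d.+1 = s.+1)%N by rewrite /s; lia.
have hs2 : (N - d = s.+2)%N by rewrite /s; lia.
have hs0 : (N - d.+2 = s)%N by rewrite /s; lia.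
have hsk : (s + d.+1 = k)%N by rewrite /s; lia.
set P1 := \sum_(0 <= i < s) B i (i + d.+1).+1.
set P2 := \sum_(0 <= i < s) B i.+1 (i + d.+1).
set P3 := \sum_(0 <= i < s) B i.+1 (i + d.+1).+1.
set P4 := \sum_(0 <= i < s) B i (i + d.+1).
have e1 : D d.+1 = Tp 0 d.+1 - Tm s k + \sum_(0 <= i < s) (Tp i.+1 (i + d.+1).+1 - Tm i (i + d.+1)).
  rewrite /D hs1 sumrB big_nat_recl // big_nat_recr //= sumrB hsk add0n.
  have -> : \sum_(0 <= i < s) Tp i.+1 (i.+1 + d.+1) = \sum_(0 <= i < s) Tp i.+1 (i + d.+1).+1.
    by apply: eq_bigr => i _; rewrite addSn.
  lra.
have e2 : \sum_(0 <= i < s) (Tp i.+1 (i + d.+1).+1 - Tm i (i + d.+1)) = P1 + P2 - P3 - P4.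
  rewrite /P1 /P2 /P3 /P4 -big_split -!sumrB /=; apply: eq_big_nat => i hi; rewrite L1 //; lia.
have e3 : m d.+2 = P1.
  rewrite /m hs0; apply: eq_bigr => i _; rewrite !addnS //.
have e4 : m d.+1 = B 0 d.+1 + P3.
  rewrite /m hs1 big_nat_recl // add0n; congr (_ + _); apply: eq_bigr => i _; rewrite addSn //.
have e5 : m d.+1 = P4 + B s k.
  rewrite /m hs1 big_nat_recr //= hsk //.
have e6 : m d = B 0 d + P2 + B s.+1 k.
  rewrite /m hs2 big_nat_recl // big_nat_recr //= add0n.
  have -> : (s.+1 + d = k)%N by rewrite -hsk addSn addnS.
  rewrite addrA; congr (_ + _ + _); apply: eq_bigr => i _; rewrite addSn addnS //.
have hsk' : (s < k)%N by rewrite /s; lia.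
rewrite e1 e2 Lb1 // Le1 //; lra.
Qed.

End S.
Local Open Scope ring_scope.
Lemma tri (F : nat -> nat -> Rdefinitions.R) n :
  \sum_(0 <= a < n) \sum_(0 <= b < n) (if (a <= b)%N then F a b else 0) =
  \sum_(0 <= d < n) \sum_(0 <= i < n - d) F i (i + d).
Proof.
elim: n => [|n IH]; first by rewrite !big_geq.
set G := fun a b => if (a <= b)%N then F a b else 0.
have h1 : \sum_(0 <= a < n.+1) \sum_(0 <= b < n.+1) G a b =
   \sum_(0 <= a < n.+1) \sum_(0 <= b < n) G a b + \sum_(0 <= a < n.+1) G a n.
  by rewrite -big_split; apply: eq_bigr => a _; rewrite big_nat_recr.
have h2 : \sum_(0 <= a < n.+1) \sum_(0 <= b < n) G a b = \sum_(0 <= a < n) \sum_(0 <= b < n) G a b.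
  rewrite big_nat_recr //= [X in _ + X]big1_seq ?addr0 // => b /andP[_].
  rewrite mem_index_iota /G => hb; case: ifP => //; lia.
have h3 : \sum_(0 <= a < n.+1) G a n = \sum_(0 <= a < n.+1) F a n.
  by apply: eq_big_nat => a ha; rewrite /G; case: ifP => //; lia.
have h4 : \sum_(0 <= d < n.+1) \sum_(0 <= i < n.+1 - d) F i (i + d) =
   \sum_(0 <= d < n.+1) (\sum_(0 <= i < n - d) F i (i + d) + F (n - d)%N n).
  apply: eq_big_nat => d hd.
  have -> : (n.+1 - d = (n - d).+1)%N by lia.
  rewrite big_nat_recr //; congr (_ + _); congr F; lia.
have h5 : \sum_(0 <= d < n.+1) F (n - d)%N n = \sum_(0 <= a < n.+1) F a n.
  rewrite [RHS]big_nat_rev; apply: eq_bigr => d _; congr F; lia.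
rewrite h1 h2 /G IH h3 h4 big_split /= h5; congr (_ + _).
by rewrite [RHS]big_nat_recr //= subnn [X in _ + X]big_geq // addr0.
Qed.

Lemma stair_files n (F : nat -> nat -> Rdefinitions.R) :
  \sum_(x in stair n) F x.1 x.2 = \sum_(0 <= d < n) \sum_(0 <= i < n - d) F i (i + d).
Proof.
rewrite -tri big_mkcond /=.
transitivity (\sum_(a : 'I_n) \sum_(b : 'I_n) (if (a <= b)%N then F a b else 0)).
  rewrite pair_bigA; apply: eq_bigr => -[a b] _; by rewrite inE.
rewrite big_mkord; apply: eq_bigr => a _; by rewrite big_mkord.
Qed.
Definition ee (k d : nat) : Rdefinitions.R :=
  ((d%:R) * (d%:R + 1) - (k.+1%:R) * (k.+1%:R + 1)) / 2.
Definition cc (k d : nat) : Rdefinitions.R := if d is 0 then ee k 0 / 2 else ee k d.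

Lemma ee_step k d : ee k d.+1 = ee k d + d%:R + 1.
Proof. rewrite /ee -addn1 natrD /=; field; by rewrite ?pnatr_eq0. Qed.

Lemma tele k (m D : nat -> Rdefinitions.R) :
  (forall d, (d.+1 < k.+1)%N -> D d.+1 = m d - m d.+1 - m d.+1 + m d.+2) ->
  forall j, (j <= k)%N ->
  \sum_(0 <= d < j) ee k d.+1 * D d.+1 =
  ee k j * (m j.+1 - m j) - ee k 0 * (m 1 - m 0) - j%:R * m j + \sum_(0 <= d < j) m d.
Proof.
move=> hD; elim => [|j IH] hj.
  by rewrite !big_geq // mul0r; lra.
rewrite !big_nat_recr //= IH; last lia.
rewrite hD; last lia.
rewrite ee_step -addn1 natrD /=.
ring.
Qed.

Lemma oneD k (m D : nat -> Rdefinitions.R) :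
  m k.+1 = 0 ->
  D 0 = 1 + m 1 + m 1 - m 0 - m 0 ->
  (forall d, (d.+1 < k.+1)%N -> D d.+1 = m d - m d.+1 - m d.+1 + m d.+2) ->
  \sum_(0 <= d < k.+1) cc k d * D d =
  \sum_(0 <= d < k.+1) m d - ((k.+1 * (k.+1 + 1))%:R / 4%:R).
Proof.
move=> hm hD0 hD.
rewrite big_nat_recl //.
have -> : \sum_(0 <= i < k) cc k i.+1 * D i.+1 = \sum_(0 <= i < k) ee k i.+1 * D i.+1 by [].
rewrite (tele hD) // hm [X in _ = X - _]big_nat_recr //= hD0.
have -> : ee k k = - (k.+1%:R) by rewrite /ee -addn1 natrD; field; by rewrite ?pnatr_eq0.
rewrite /cc /ee !natrM !natrD /= -addn1 natrD; field; by rewrite ?pnatr_eq0.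
Qed.

Theorem corollary3p18 (n : nat) (hn : (1 <= n)%N) :
  toggle_equiv (fun I : {set pt n} => \sum_(p in stair n) ind p I)
               (fun _ => ((n * (n + 1))%:R / 4%:R : Rdefinitions.R)).
Proof.
case: n hn => [//|k] _.
exists (fun x : pt k.+1 => cc k (x.2 - x.1)%N) => I hI.
have h1 : \sum_(x in stair k.+1) cc k (x.2 - x.1)%N * toggleT x I =
          \sum_(0 <= d < k.+1) cc k d * D I d.
  transitivity (\sum_(x in stair k.+1)
     (fun i j : nat => cc k (j - i)%N * toggleT ((inord i, inord j) : pt k.+1) I) x.1 x.2).
    by apply: eq_bigr => -[a b] _; rewrite /= !inord_val.
  rewrite (@stair_files k.+1 (fun i j : nat => cc k (j - i)%N * toggleT ((inord i, inord j) : pt k.+1) I)).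
  apply: eq_bigr => d _.
  rewrite /D mulr_sumr; apply: eq_bigr => i _.
  have -> : (i + d - i = d)%N by lia.
  by [].
have h2 : \sum_(p in stair k.+1) ind p I = \sum_(0 <= d < k.+1) m I d.
  transitivity (\sum_(x in stair k.+1) B I x.1 x.2).
    by apply: eq_bigr => x _; rewrite /B /ind (BbE I x).
  by rewrite (@stair_files k.+1 (B I)).
rewrite h1 h2 (oneD (m := m I) (D := D I)) //.
- by rewrite /m subnn big_geq.
- exact: D0.
- move=> d hd; exact: Dd.
Qed.
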